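(* Assume the standing assumptions and fix a function $h$ satisfying (h1)–(h4). Let $\tau=\min\{n\ge1:S_n\le0\}$. Suppose there is a stopping time $\sigma$ (with respect to an admissible filtration) such that $\mathbf P(\sigma>0)>0$, $\mathbf P(S_\sigma\le0)=1$ and $\lim_{x\to\infty}\delta_\sigma(x)=0$. Then $\lim_{x\to\infty}\delta_\tau(x)=0$.
   Context: Standing assumptions: $\{\xi_n\}_{n\ge1}$ are i.i.d. real random variables with common distribution function $F$ and finite mean $\mathbf E\xi_1=-m<0$. $F$ is long-tailed: $\overline F(x)=1-F(x)>0$ for all $x$, and $\overline F(x-c)/\overline F(x)\to1$ as $x\to\infty$ for every fixed $c>0$. Notation: $S_0=0$ and $S_n=\sum_{i=1}^n\xi_i$. Admissible filtration: stopping times are taken with respect to a filtration $\{\mathcal F_n\}_{n\ge0}$ such that $\xi_n$ is $\mathcal F_n$-measurable and $\xi_{n+1}$ is independent of $\mathcal F_n$. The function $h:\mathbb R_+\to\mathbb R_+$ satisfies: - (h1) $h(x)\le x/2$; - (h2) $h(x)\to\infty$; - (h3) $\overline F(x-h(x))/\overline F(x)\to1$ as $x\to\infty$; - (h4) there exists $x_0$ with $h(x+t)\le h(x)+t$ for all $x\ge x_0$, $t\ge0$. For $x\ge0$, let $\mu(x)=\min\{n:S_n>x\}$, with $\min\emptyset=\infty$. For a stopping time $\sigma$, define $$A_{\sigma,2}(x)=\{\mu(x)\le\sigma,\ S_{\mu(x)-1}>h(x)\},\qquad \delta_\sigma(x)=\sup_{y\ge x}\frac{\mathbf P(A_{\sigma,2}(y))}{\overline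 F(y)}.$$ *)

(* Defs.v *)
From HB Require Import structures.
From mathcomp Require Import all_boot all_order all_algebra.
From mathcomp Require Import all_classical all_reals all_analysis.
Set Implicit Arguments. Unset Strict Implicit. Unset Printing Implicit Defensive.
Import Order.TTheory GRing.Theory Num.Theory.
Import numFieldNormedType.Exports.
Local Open Scope classical_set_scope.
Local Open Scope ring_scope.

(* Values in N u {oo}: [Some n] = n, [None] = infinity. *)
Definition le_opt (n : nat) (s : option nat) : Prop :=
  match s with Some m => (n <= m)%N | None => True end.

Definition first_time (p : pred nat) : option nat :=
  match pselect (exists n, p n) with
  | left H => Some (ex_minn H)
  | right _ => None
  end.

Section Walk.
Context {d : measure_display} {T : measurableType d} {R : realType}.

(* xi i is the paper's xi_{i+1}; S n = xi_1 + ... + xi_n, S 0 = 0. *)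
Definition walk (xi : nat -> T -> R) (n : nat) (w : T) : R :=
  \sum_(i < n) xi i w.

Definition Fbar (P : probability T R) (xi : nat -> T -> R) (x : R) : R :=
  fine (P [set w | x < xi 0%N w]).

Definition mu (xi : nat -> T -> R) (x : R) (w : T) : option nat :=
  first_time (fun n => x < walk xi n w).

Definition tau (xi : nat -> T -> R) (w : T) : option nat :=
  first_time (fun n => (0 < n)%N && (walk xi n w <= 0)).

Definition A2 (xi : nat -> T -> R) (h : R -> R) (sigma : T -> option nat)
    (x : R) : set T :=
  [set w | exists n, mu xi x w = Some n /\ le_opt n (sigma w) /\
                     h x < walk xi n.-1 w].

Definition delta (P : probability T R) (xi : nat -> T -> R) (h : R -> R)
    (sigma : T -> option nat) (x : R) : \bar R :=
  ereal_sup [set ((fine (P (A2 xi h sigma y)) / Fbar P xi y)%:E) | y in [set y | x <= y]].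

Definition iid (P : probability T R) (xi : nat -> T -> R) : Prop :=
  (forall i, measurable_fun setT (xi i)) /\
  (forall i (B : set R), measurable B ->
      P (xi i @^-1` B) = P (xi 0%N @^-1` B)) /\
  (forall (n : nat) (B : nat -> set R), (forall i, measurable (B i)) ->
      P (\bigcap_(i in [set i | (i < n)%N]) (xi i @^-1` B i)) =
      (\prod_(i < n) P (xi i @^-1` B i))%E).

Definition negative_finite_mean (P : probability T R) (xi : nat -> T -> R) : Prop :=
  P.-integrable setT (EFin \o xi 0%N) /\ ('E_P[xi 0%N] < 0)%E.

Definition long_tailed (P : probability T R) (xi : nat -> T -> R) : Prop :=
  (forall x, 0 < Fbar P xi x) /\
  (forall c : R, 0 < c ->
     (fun x => Fbar P xi (x - c) / Fbar P xi x) @ +oo --> (1 : R)).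

(* conditions (h1)-(h4) on h : R_+ -> R_+ (only its values on [0,oo) matter) *)
Definition admissible_h (P : probability T R) (xi : nat -> T -> R) (h : R -> R) : Prop :=
  (forall x, 0 <= x -> 0 <= h x) /\
  (forall x, 0 <= x -> h x <= x / 2) /\
  (h @ +oo --> +oo) /\
  ((fun x => Fbar P xi (x - h x) / Fbar P xi x) @ +oo --> (1 : R)) /\
  (exists x0, forall x t, x0 <= x -> 0 <= t -> h (x + t) <= h x + t).

Definition admissible_filtration (P : probability T R) (xi : nat -> T -> R)
    (F : nat -> set (set T)) : Prop :=
  (forall n, sigma_algebra setT (F n)) /\
  (forall n, F n `<=` measurable) /\
  (forall n, F n `<=` F n.+1) /\
  (forall i (B : set R), measurable B -> F i.+1 (xi i @^-1` B)) /\
  (forall n (A : set T) (B : set R), F n A -> measurable B ->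
      P (A `&` xi n @^-1` B) = (P A * P (xi n @^-1` B))%E).

Definition stopping_time (F : nat -> set (set T)) (sigma : T -> option nat) : Prop :=
  forall n, F n [set w | sigma w = Some n].

End Walk.

(* Main.v *)
Require Import Defs.
From HB Require Import structures.
From mathcomp Require Import all_boot all_order all_algebra.
From mathcomp Require Import all_classical all_reals all_analysis.
From mathcomp Require Import ring lra.
Import Order.TTheory GRing.Theory Num.Theory.
Import numFieldNormedType.Exports.
Local Open Scope classical_set_scope.
Local Open Scope ring_scope.
Section Aux.
Context {d : measure_display} {T : measurableType d} {R : realType}.
Variable xi : nat -> T -> R.

Lemma first_timeP (p : pred nat) n :
  first_time p = Some n <-> p n /\ (forall k, (k < n)%N -> ~~ p k).
Proof.
rewrite /first_time; case: pselect => [H|H].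
  case: ex_minnP => m pm minm; split.
    move=> [<-]; split => // k km; apply/negP => pk.
    by have := minm _ pk; rewrite leqNgt km.
  move=> [pn hn]; congr Some; apply/eqP; rewrite eqn_leq minm //=.
  by rewrite leqNgt; apply/negP => /hn; rewrite pm.
split => // [[pn _]]; exfalso; apply: H; by exists n.
Qed.

Lemma le_opt_first (p : pred nat) n :
  le_opt n (first_time p) <-> (forall k, (k < n)%N -> ~~ p k).
Proof.
case E: (first_time p) => [m|] /=.
  move/first_timeP: E => [pm hm]; split.
    by move=> nm k kn; apply: hm; exact: leq_trans kn nm.
  move=> hk; rewrite leqNgt; apply/negP => /hk; by rewrite pm.
split => // _ k _; apply/negP => pk.
move: E; rewrite /first_time; case: pselect => // H _; apply: H; by exists k.
Qed.

Lemma muP y w n : mu xi y w = Some n <->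
  y < walk xi n w /\ (forall k, (k < n)%N -> walk xi k w <= y).
Proof.
rewrite /mu first_timeP; split => -[a b]; split => // k /b.
  by rewrite -leNgt.
by rewrite -leNgt.
Qed.

Lemma le_opt_tau n w : le_opt n (tau xi w) <->
  (forall k, (0 < k)%N -> (k < n)%N -> 0 < walk xi k w).
Proof.
rewrite /tau le_opt_first; split => H k.
  by move=> k0 kn; have := H k kn; rewrite k0 /= -ltNge.
move=> kn; case: k kn H => [//|k] kn H; rewrite /= -ltNge; exact: H.
Qed.

Lemma A2E h s y : A2 xi h s y = \bigcup_n
  ([set w | y < walk xi n w] `&`
   \bigcap_(k in [set k | (k < n)%N]) [set w | walk xi k w <= y] `&`
   [set w | le_opt n (s w)] `&` [set w | h y < walk xi n.-1 w]).
Proof.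
apply/seteqP; split => w /=.
  move=> [n [Hm [H3 H4]]]; have [H1 H2] := (muP _ _ _).1 Hm.
  by exists n.
move=> [n _ [[[H1 H2] H3] H4]]; exists n; split => //.
by apply/(muP _ _ _); split => // k kn; exact: H2.
Qed.

Section Gen.
Variable G : set (set T).
Hypothesis HG : forall i (B : set R), measurable B -> <<s G >> (xi i @^-1` B).

Lemma walk_gmeas n :
  measurable_fun [set: g_sigma_algebraType G] (walk xi n : g_sigma_algebraType G -> R).
Proof.
rewrite /walk; apply: measurable_sum => i _ B mB; rewrite setTI; exact: HG.
Qed.

Lemma gmeas_lt n a : <<s G >> [set w | a < walk xi n w].
Proof.
have := walk_gmeas n measurableT _ (measurable_itv `]a, +oo[); rewrite setTI.
congr (<<s G >> _); apply/seteqP; split => w /=; rewrite in_itv /= andbT //.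
Qed.

Lemma gmeas_le n a : <<s G >> [set w | walk xi n w <= a].
Proof.
have := walk_gmeas n measurableT _ (measurable_itv `]-oo, a]); rewrite setTI.
congr (<<s G >> _); apply/seteqP; split => w /=; rewrite in_itv /= //.
Qed.

Lemma gmeas_A2 h s y : (forall n, <<s G >> [set w | le_opt n (s w)]) ->
  <<s G >> (A2 xi h s y).
Proof.
move=> Hs; rewrite A2E.
apply: (@bigcupT_measurable _ (g_sigma_algebraType G)) => n.
apply: (@measurableI _ (g_sigma_algebraType G)); last exact: gmeas_lt.
apply: (@measurableI _ (g_sigma_algebraType G)); last exact: Hs.
apply: (@measurableI _ (g_sigma_algebraType G)); first exact: gmeas_lt.
apply: (@bigcap_measurableType _ (g_sigma_algebraType G)) => k _; exact: gmeas_le.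
Qed.

End Gen.
End Aux.

Section Indep.
Context {d : measure_display} {T : measurableType d} {R : realType}.
Variables (P : probability T R) (xi : nat -> T -> R) (F : nat -> set (set T)).
Hypothesis HF : admissible_filtration P xi F.
Hypothesis Hiid : iid P xi.

Lemma salgI (M : set (set T)) A B : sigma_algebra setT M -> M A -> M B -> M (A `&` B).
Proof.
move=> HM; have E := measurable_g_measurableTypeE HM.
move=> MA MB; rewrite -E; apply: (@measurableI _ (g_sigma_algebraType M)); by rewrite E.
Qed.

Lemma F_mono m n : (m <= n)%N -> F m `<=` F n.
Proof.
have [_ [_ [FS _]]] := HF.
elim: n => [|n IH]; first by rewrite leqn0 => /eqP ->.
rewrite leq_eqVlt => /orP [/eqP -> //|]; rewrite ltnS => /IH H.
exact: subset_trans H (FS n).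
Qed.

Definition cyl n (B : nat -> set R) : set T :=
  \bigcap_(i in [set i | (i < n)%N]) (xi i @^-1` B i).

Lemma cyl0 B : cyl 0 B = setT.
Proof. by apply/seteqP; split => w //= _ i. Qed.

Lemma cylS n B : cyl n.+1 B = cyl n B `&` xi n @^-1` B n.
Proof.
apply/seteqP; split => w /=.
  move=> H; split; [move=> i /= ilt; apply: H; exact: ltnW | apply: H => /=; exact: ltnSn].
move=> [H1 H2] i /=; rewrite ltnS leq_eqVlt => /orP [/eqP -> // | /H1 //].
Qed.

Lemma cyl_F n B : (forall i, measurable (B i)) -> F n (cyl n B).
Proof.
have [Fs [_ [_ [Fxi _]]]] := HF.
move=> mB; elim: n => [|n IH].
  rewrite cyl0; have [F0 FC _] := Fs 0%N; by have := FC set0 F0; rewrite setD0.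
rewrite cylS; apply: (salgI _ _ _ (Fs n.+1)); last exact: Fxi.
exact: (F_mono _ _ (leqnSn n) _ IH).
Qed.

Lemma indep_cyl A n B : F 0 A -> (forall i, measurable (B i)) ->
  P (A `&` cyl n B) = (P A * \prod_(i < n) P (xi i @^-1` B i))%E.
Proof.
have [Fs [_ [_ [Fxi Find]]]] := HF.
move=> FA mB; elim: n => [|n IH].
  by rewrite cyl0 setIT big_ord0 mule1.
rewrite cylS setIA Find //; last first.
  apply: (salgI _ _ _ (Fs n)); last exact: cyl_F.
  exact: (F_mono _ _ (leq0n n) _ FA).
by rewrite IH big_ord_recr /= muleA.
Qed.

Lemma indep_cyl2 A n B : F 0 A -> (forall i, measurable (B i)) ->
  P (A `&` cyl n B) = (P A * P (cyl n B))%E.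
Proof.
move=> FA mB; rewrite indep_cyl //; congr (_ * _)%E.
have [_ [_ H3]] := Hiid; by rewrite /cyl H3.
Qed.

Definition Cyl : set (set T) :=
  [set E | exists n B, (forall i, measurable (B i)) /\ E = cyl n B].

Lemma Cyl_setI : setI_closed Cyl.
Proof.
move=> _ _ [n [B [mB ->]]] [m [B' [mB' ->]]].
exists (maxn n m), (fun i => (if (i < n)%N then B i else setT) `&`
                          (if (i < m)%N then B' i else setT)); split.
  by move=> i; apply: measurableI; case: ifP.
apply/seteqP; split => w /=.
  move=> [H1 H2] i /= _; split; case: ifP => // iln; [exact: H1|exact: H2].
move=> H; split => i /= ilt.
  have := H i (leq_trans ilt (leq_maxl n m)); rewrite ilt; by case.
have := H i (leq_trans ilt (leq_maxr n m)); rewrite ilt; by case.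
Qed.

Lemma xi_Cyl i B : measurable B -> Cyl (xi i @^-1` B).
Proof.
move=> mB; exists i.+1, (fun j => if j == i then B else setT); split.
  by move=> j; case: eqP.
apply/seteqP; split => w /=.
  by move=> Hw j /= jlt; case: eqP => [->|].
by move=> H; have := H i (ltnSn i); rewrite eqxx.
Qed.

Lemma Cyl_meas : Cyl `<=` measurable.
Proof.
have [Hm _] := Hiid.
move=> _ [n [B [mB ->]]]; apply: bigcap_measurableType => i _.
by have := Hm i measurableT _ (mB i); rewrite setTI.
Qed.

Definition Hs A : set (set T) := [set E | measurable E /\ P (A `&` E) = (P A * P E)%E].

Lemma finP (E : set T) : measurable E -> P E = (fine (P E))%:E.
Proof. by move=> mE; rewrite fineK // fin_num_measure. Qed.

Lemma Hs_dynkin A : measurable A -> dynkin (Hs A).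
Proof.
move=> mA; split.
- by split => //; rewrite setIT probability_setT mule1.
- move=> E [mE HE]; split; first exact: measurableC.
  have PAoo : (P A < +oo)%E by apply: (le_lt_trans (probability_le1 P mA)); exact: ltry.
  rewrite -setDE measureD //.
  apply: (@eq_trans _ _ (P A - P A * P E)%E); first by congr (_ - _)%E; exact: HE.
  rewrite probability_setC // (finP _ mA) (finP _ mE).
  rewrite -EFinM -EFinB.
  have -> : (1 - (fine (P E))%:E = (1 - fine (P E))%:E)%E by [].
  by rewrite -EFinM; congr EFin; ring.
- move=> G tG HG; split.
    by apply: bigcupT_measurable => k; have [] := HG k.
  have mG : forall k, setT k -> measurable (G k) by move=> k _; have [] := HG k.
  have mAG : forall k, setT k -> measurable (A `&` G k).
    by move=> k _; apply: measurableI => //; exact: mG.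
  have tAG : trivIset setT (fun k => A `&` G k) by apply: trivIset_setIl.
  rewrite setI_bigcupr (measure_bigcup P _ _ mAG tAG) (measure_bigcup P _ _ mG tG).
  rewrite (finP _ mA) -nneseriesZl //; apply: eq_eseriesr => k _.
  have [_ HGk] := HG k; rewrite -(finP _ mA); exact: HGk.
Qed.

Lemma gen_Cyl_indep A : F 0 A -> <<s Cyl >> `<=` Hs A.
Proof.
have [Fs [FM _]] := HF.
move=> FA; have mA : measurable A := FM 0%N A FA.
have DH : lambda_system setT (Hs A) by apply/dynkin_lambda_system; exact: (Hs_dynkin A mA).
apply: (@lambda_system_subset T Cyl Cyl_setI setT (Hs A) DH) => //.
move=> _ [n [B [mB ->]]]; split; first by apply: Cyl_meas; exists n, B.
exact: indep_cyl2.
Qed.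

End Indep.

Section Main.
Context {d : measure_display} {T : measurableType d} {R : realType}.
Variables (P : probability T R) (xi : nat -> T -> R) (F : nat -> set (set T)).
Variables (h : R -> R) (s : T -> option nat).
Hypothesis HF : admissible_filtration P xi F.
Hypothesis Hiid : iid P xi.
Hypothesis Hst : stopping_time F s.

Lemma measE : <<s @measurable _ T >> = @measurable _ T.
Proof. apply: sigma_algebra_id; exact: sigma_algebra_measurable. Qed.

Lemma xi_meas i (B : set R) : measurable B -> <<s @measurable _ T >> (xi i @^-1` B).
Proof.
move=> mB; rewrite measE; have [Hm _] := Hiid.
by have := Hm i measurableT _ mB; rewrite setTI.
Qed.

Lemma walk_le_meas n a : measurable [set w | walk xi n w <= a].
Proof. rewrite -measE; exact: (gmeas_le xi (@measurable _ T) xi_meas n a). Qed.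

Lemma s_meas n : measurable [set w | s w = Some n].
Proof. have [_ [FM _]] := HF; exact: FM _ _ (Hst n). Qed.

Lemma A2s_meas y : measurable (A2 xi h s y).
Proof.
rewrite -measE; apply: (gmeas_A2 xi (@measurable _ T) xi_meas) => n; rewrite measE.
have -> : [set w | le_opt n (s w)] =
   ~` \bigcup_(k in [set k | (k < n)%N]) [set w | s w = Some k].
  apply/seteqP; split => w /=; case E: (s w) => [m|] /=.
  - move=> nm [k kn /= mk]; rewrite E in mk; case: mk => mk.
    by rewrite -mk /= in kn; move: (leq_trans kn nm); rewrite ltnn.
  - by move=> _ [k _ /=]; rewrite E.
  - move=> H; rewrite leqNgt; apply/negP => mn; apply: H; by exists m.
  - by [].
apply: measurableC; apply: bigcup_measurable => k _; exact: s_meas.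
Qed.

Lemma A2tau_indep y : measurable (A2 xi h (tau xi) y) /\
  P ([set w | s w = Some 0%N] `&` A2 xi h (tau xi) y) =
  (P [set w | s w = Some 0%N] * P (A2 xi h (tau xi) y))%E.
Proof.
suff : <<s Cyl xi >> (A2 xi h (tau xi) y) by move/(gen_Cyl_indep P xi F HF Hiid _ (Hst 0%N)).
apply: gmeas_A2.
  move=> i B mB; apply: sub_sigma_algebra; exact: xi_Cyl.
move=> n.
have -> : [set w | le_opt n (tau xi w)] =
  \bigcap_(k in [set k | (0 < k)%N && (k < n)%N]) [set w | 0 < walk xi k w].
  apply/seteqP; split => w /=.
    by move=> /le_opt_tau H k /= /andP [k0 kn]; exact: H.
  by move=> H; apply/le_opt_tau => k k0 kn; apply: H; rewrite /= k0 kn.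
apply: (@bigcap_measurableType _ (g_sigma_algebraType (Cyl xi))) => k _.
apply: gmeas_lt => i B mB; apply: sub_sigma_algebra; exact: xi_Cyl.
Qed.

Lemma main_ineq y : P [set w | exists n, s w = Some n /\ walk xi n w <= 0] = 1%E ->
  (P (A2 xi h (tau xi) y) <=
   P (A2 xi h s y) + P [set w | s w = Some 0%N] * P (A2 xi h (tau xi) y))%E.
Proof.
move=> PG.
set Good := [set w | exists n, s w = Some n /\ walk xi n w <= 0].
set Z := [set w | s w = Some 0%N].
have [mAt Hind] := A2tau_indep y.
have mAs := A2s_meas y.
have mZ : measurable Z := s_meas 0.
have mG : measurable Good.
  have -> : Good = \bigcup_n ([set w | s w = Some n] `&` [set w | walk xi n w <= 0]).
    apply/seteqP; split => w /=; first by move=> [n H]; exists n.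
    by move=> [n _ H]; exists n.
  apply: bigcupT_measurable => n; apply: measurableI; [exact: s_meas|exact: walk_le_meas].
have PnG : P (~` Good) = 0%E by rewrite probability_setC // PG subee.
have sub : A2 xi h (tau xi) y `<=` (A2 xi h s y `|` (Z `&` A2 xi h (tau xi) y)) `|` ~` Good.
  move=> w Aw; case: (pselect (Good w)) => [[m [sm wm]]|nG]; last by right.
  left; case: m sm wm => [|m] sm wm; first by right.
  left; case: Aw => n [Hmu [Hle Hh]]; exists n; split => //; split => //.
  rewrite sm /=; have H := (le_opt_tau xi n w).1 Hle.
  rewrite leqNgt; apply/negP => mn; have := H m.+1 (ltn0Sn m) mn; by rewrite ltNge wm.
have mZA : measurable (Z `&` A2 xi h (tau xi) y) by apply: measurableI.
have mU1 : measurable (A2 xi h s y `|` (Z `&` A2 xi h (tau xi) y)) by apply: measurableU.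
have mU2 : measurable ((A2 xi h s y `|` (Z `&` A2 xi h (tau xi) y)) `|` ~` Good).
  by apply: measurableU => //; apply: measurableC.
have L1 : (P (A2 xi h (tau xi) y) <=
           P ((A2 xi h s y `|` (Z `&` A2 xi h (tau xi) y)) `|` ~` Good))%E.
  by apply: le_measure => //; rewrite inE.
have L2 : (P ((A2 xi h s y `|` (Z `&` A2 xi h (tau xi) y)) `|` ~` Good) <=
           P (A2 xi h s y `|` (Z `&` A2 xi h (tau xi) y)) + P (~` Good))%E.
  by apply: measureU2 => //; apply: measurableC.
have L3 : (P (A2 xi h s y `|` (Z `&` A2 xi h (tau xi) y)) <=
           P (A2 xi h s y) + P (Z `&` A2 xi h (tau xi) y))%E.
  exact: measureU2.
apply: (le_trans L1); apply: (le_trans L2); rewrite PnG adde0.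
apply: (le_trans L3); by rewrite Hind.
Qed.

End Main.

Theorem lemma4 (d : measure_display) (T : measurableType d) (R : realType)
  (P : probability T R) (xi : nat -> T -> R) (h : R -> R) :
  iid P xi -> negative_finite_mean P xi -> long_tailed P xi ->
  admissible_h P xi h ->
  (exists (F : nat -> set (set T)) (sigma : T -> option nat),
     [/\ admissible_filtration P xi F, stopping_time F sigma,
         (0 < P [set w | sigma w <> Some 0%N])%E,
         P [set w | exists n, sigma w = Some n /\ walk xi n w <= 0] = 1%E &
         delta P xi h sigma x @[x --> +oo] --> 0%E]) ->
  delta P xi h (tau xi) x @[x --> +oo] --> 0%E.
Proof.
move=> Hiid _ [LTpos _] _ [F [s [HF Hst Ppos PG Hdelta]]].
set Z := [set w | s w = Some 0%N].
have mZ : measurable Z := s_meas P xi F s HF Hst 0.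
set p := fine (P Z).
have p1 : p < 1.
  move: Ppos; rewrite (_ : [set w | s w <> Some 0%N] = ~` Z) //.
  rewrite probability_setC // (finP P Z mZ) -EFinB lte_fin subr_gt0 //.
set c := (1 - p)^-1.
have c0 : 0 < c by rewrite /c invr_gt0 subr_gt0.
have key : forall y, fine (P (A2 xi h (tau xi) y)) <= c * fine (P (A2 xi h s y)).
  move=> y; have := main_ineq P xi F h s HF Hiid Hst y PG.
  have [mAt _] := A2tau_indep P xi F h s HF Hiid Hst y.
  have mAs := A2s_meas P xi F h s HF Hiid Hst y.
  rewrite (finP P _ mAt) (finP P _ mAs) (finP P Z mZ) -EFinM -EFinD lee_fin -/p => H.
  have H2 : (1 - p) * fine (P (A2 xi h (tau xi) y)) <= fine (P (A2 xi h s y)) by lra.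
  rewrite -[X in X <= _](@mulKf _ (1 - p)); last by rewrite subr_eq0 gt_eqF.
  rewrite -/c; apply: ler_wpM2l; [exact: ltW | exact: H2].
have bound : forall x, (0 <= delta P xi h (tau xi) x <= delta P xi h s x * c%:E)%E.
  move=> x; apply/andP; split.
    have Sx : [set ((fine (P (A2 xi h (tau xi) y)) / Fbar P xi y)%:E) | y in [set y | x <= y]]
       ((fine (P (A2 xi h (tau xi) x)) / Fbar P xi x)%:E) by exists x => /=.
    apply: (le_trans _ (ereal_sup_ubound Sx)); rewrite lee_fin.
    apply: divr_ge0; [apply: fine_ge0; exact: measure_ge0 | exact: ltW].
  apply: ge_ereal_sup => _ [y /= xy <-].
  have Sy : [set ((fine (P (A2 xi h s y)) / Fbar P xi y)%:E) | y in [set y | x <= y]]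
       ((fine (P (A2 xi h s y)) / Fbar P xi y)%:E) by exists y.
  have le1 := ereal_sup_ubound Sy.
  apply: (le_trans _ (lee_wpmul2r _ le1)); last by rewrite lee_fin ltW.
  rewrite -EFinM lee_fin mulrAC; apply: ler_wpM2r.
    by rewrite invr_ge0 ltW.
  by rewrite mulrC.
apply: (@squeeze_cvge _ _ _ _ (fun=> 0%E) _ (fun x => delta P xi h s x * c%:E)%E).
- by apply: nearW => x; exact: bound.
- exact: cvg_cst.
- by have := cvgeZr (y := c%:E) (fin_numE _) Hdelta; rewrite mul0e.
Qed.
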